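(* Let $G=K_{1,2,2}$ be the complete 3-partite graph with partite sets $\{x\}$, $\{y_1,y_2\}$, $\{z_1,z_2\}$, and let $L$ be a prime distance labeling of $G$. If $L(x)=0$, then $\{L(y_1),L(y_2),L(z_1),L(z_2)\}=\{2,-2,5,-5\}$ with $L(y_1)=-L(y_2)$ and $L(z_1)=-L(z_2)$. Conversely, if $\{L(y_1),L(y_2),L(z_1),L(z_2)\}=\{2,-2,5,-5\}$ with $L(y_1)=-L(y_2)$ and $L(z_1)=-L(z_2)$, then $L(x)=0$.
   Context: A prime distance labeling of a graph $G$ is an injective map $L:V(G)\to\mathbb{Z}$ such that for every pair of adjacent vertices $u,v$, the integer $|L(u)-L(v)|$ is prime. *)

(* Defs.v *)
From mathcomp Require Import all_boot all_order all_algebra.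
Set Implicit Arguments. Unset Strict Implicit. Unset Printing Implicit Defensive.
Import GRing.Theory Num.Theory.

Inductive K122 : Type := vx | vy1 | vy2 | vz1 | vz2.

Definition part (v : K122) : nat :=
  match v with vx => 0 | vy1 | vy2 => 1 | vz1 | vz2 => 2 end.

Definition K122_adj (u v : K122) : Prop := part u <> part v.

Definition prime_distance_labeling (L : K122 -> int) : Prop :=
  injective L /\
  forall u v, K122_adj u v -> prime `|L u - L v|%N.

(* Main.v *)
Require Import Defs.
From mathcomp Require Import all_boot all_order all_algebra.
From mathcomp Require Import zify.
Import GRing.Theory Num.Theory.
Local Open Scope ring_scope.
Set Implicit Arguments.
Unset Strict Implicit.
Definition F (z : int) : Prop :=
  ((`|z| = 2)%N \/ (odd `|z| /\ 3 <= `|z|)%N) /\ ((3 %| `|z|)%N -> `|z|%N = 3%N).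
Lemma FP z : prime `|z| -> F z.
Proof.
move=> pz; split.
  case: (even_prime pz) => [->|o]; [by left | right; split=> //].
  by case: `|z|%N pz o => [|[|[]]].
move=> d; apply/eqP; by rewrite eq_sym -dvdn_prime2.
Qed.
Lemma triple0 (n : int) : F n -> F (n - 2) -> F (n + 2) -> odd `|n|%N -> n = 5 \/ n = -5.
Proof. rewrite /F. lia. Qed.
Lemma oddcase a1 a2 b1 b2 : `|a1|%N = 2%N -> odd `|a2|%N -> odd `|b1|%N -> odd `|b2|%N -> b1 <> b2 ->
  F a2 -> F b1 -> F b2 -> F (a1 - b1) -> F (a1 - b2) -> F (a2 - b1) -> F (a2 - b2) -> False.
Proof.
move=> h1 h2 h3 h4 h5 f0 g1 g2 f1 f2 f3 f4.
have e1 : `|a2 - b1|%N = 2%N by move: f3; rewrite /F; lia.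
have e2 : `|a2 - b2|%N = 2%N by move: f4; rewrite /F; lia.
have [[e3 e4]|[e3 e4]] : (a2 - b1 = 2 /\ a2 - b2 = -2) \/ (a2 - b1 = -2 /\ a2 - b2 = 2) by lia.
- have eb1 : b1 = a2 - 2 by lia.
  have eb2 : b2 = a2 + 2 by lia.
  rewrite eb1 eb2 in g1 g2 f1 f2.
  have [e|e] := triple0 f0 g1 g2 h2; move: f1 f2; rewrite /F; lia.
- have eb1 : b1 = a2 + 2 by lia.
  have eb2 : b2 = a2 - 2 by lia.
  rewrite eb1 eb2 in g1 g2 f1 f2.
  have [e|e] := triple0 f0 g2 g1 h2; move: f1 f2; rewrite /F; lia.
Qed.
Lemma FN a b : F (a - b) -> F (b - a).
Proof. by rewrite /F -opprB abszN. Qed.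
Lemma bodd a b : F b -> F (a - b) -> `|a|%N = 2%N -> a <> b -> odd `|b|%N.
Proof. rewrite /F. lia. Qed.
Lemma triple n : F n -> F (2 - n) -> F (-2 - n) -> odd `|n|%N -> n = 5 \/ n = -5.
Proof. rewrite /F. lia. Qed.

Definition H (a1 a2 b1 b2 : int) : Prop :=
  [/\ a1 <> a2, b1 <> b2, [/\ a1 <> b1, a1 <> b2, a2 <> b1 & a2 <> b2],
      [/\ F a1, F a2, F b1 & F b2] &
      [/\ F (a1 - b1), F (a1 - b2), F (a2 - b1) & F (a2 - b2)]].
Definition R (a1 a2 b1 b2 : int) : Prop :=
  (a1 = 2 /\ a2 = -2 \/ a1 = -2 /\ a2 = 2) /\ (b1 = 5 /\ b2 = -5 \/ b1 = -5 /\ b2 = 5).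

Lemma lemA a1 a2 b1 b2 : H a1 a2 b1 b2 -> `|a1|%N = 2%N -> R a1 a2 b1 b2.
Proof.
case=> n12 m12 [d11 d12 d21 d22] [fa1 fa2 fb1 fb2] [f11 f12 f21 f22] h1.
have o1 := bodd fb1 f11 h1 d11.
have o2 := bodd fb2 f12 h1 d12.
have [h2|h2] : `|a2|%N = 2%N \/ odd `|a2| by clear -fa2; move: fa2; rewrite /F; lia.
- have [[e1 e2]|[e1 e2]] : (a1 = 2 /\ a2 = -2) \/ (a1 = -2 /\ a2 = 2) by clear -h1 h2 n12; lia.
  + rewrite e1 e2 in f11 f12 f21 f22.
    have := triple fb1 f11 f21 o1; have := triple fb2 f12 f22 o2.
    clear -m12 e1 e2; rewrite /R; lia.
  + rewrite e1 e2 in f11 f12 f21 f22.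
    have := triple fb1 f21 f11 o1; have := triple fb2 f22 f12 o2.
    clear -m12 e1 e2; rewrite /R; lia.
- by case: (oddcase h1 h2 o1 o2 m12 fa2 fb1 fb2 f11 f12 f21 f22).
Qed.

Lemma Hswap a1 a2 b1 b2 : H a1 a2 b1 b2 -> H a2 a1 b1 b2.
Proof.
case=> n12 m12 [d11 d12 d21 d22] [fa1 fa2 fb1 fb2] [f11 f12 f21 f22].
split=> //; by [move=> e; apply: n12].
Qed.
Lemma Hflip a1 a2 b1 b2 : H a1 a2 b1 b2 -> H b1 b2 a1 a2.
Proof.
case=> n12 m12 [d11 d12 d21 d22] [fa1 fa2 fb1 fb2] [f11 f12 f21 f22].
split=> //; first by split=> e; [apply: d11|apply: d21|apply: d12|apply: d22].
by split; apply: FN.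
Qed.

Lemma lemMain a1 a2 b1 b2 : H a1 a2 b1 b2 -> R a1 a2 b1 b2 \/ R b1 b2 a1 a2.
Proof.
move=> h.
have hs := Hswap h. have hf := Hflip h. have hfs := Hswap hf.
move: (h) => [n12 m12 [d11 d12 d21 d22] [fa1 fa2 fb1 fb2] [f11 f12 f21 f22]].
have [g|g] : `|a1|%N = 2%N \/ odd `|a1| by clear -fa1; move: fa1; rewrite /F; lia.
  by left; apply: lemA.
have [g2|g2] : `|a2|%N = 2%N \/ odd `|a2| by clear -fa2; move: fa2; rewrite /F; lia.
  by left; have := lemA hs g2; clear; rewrite /R; lia.
have [g3|g3] : `|b1|%N = 2%N \/ odd `|b1| by clear -fb1; move: fb1; rewrite /F; lia.
  by right; apply: lemA.
have [g4|g4] : `|b2|%N = 2%N \/ odd `|b2| by clear -fb2; move: fb2; rewrite /F; lia.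
  by right; have := lemA hfs g4; clear; rewrite /R; lia.
have e11 : `|a1 - b1|%N = 2%N by clear -f11 g g3; move: f11; rewrite /F; lia.
have e12 : `|a1 - b2|%N = 2%N by clear -f12 g g4; move: f12; rewrite /F; lia.
have e21 : `|a2 - b1|%N = 2%N by clear -f21 g2 g3; move: f21; rewrite /F; lia.
have e22 : `|a2 - b2|%N = 2%N by clear -f22 g2 g4; move: f22; rewrite /F; lia.
exfalso; clear -e11 e12 e21 e22 n12 m12; lia.
Qed.

Lemma conv0 (c : int) : ((`|(c - 2)%R| = 2)%N \/ odd `|(c - 2)%R|) -> ((`|(c + 2)%R| = 2)%N \/ odd `|(c + 2)%R|) ->
  ((`|(c - 5)%R| = 2)%N \/ odd `|(c - 5)%R|) -> ((`|(c + 5)%R| = 2)%N \/ odd `|(c + 5)%R|) -> c = 0.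
Proof. lia. Qed.
Lemma FG z : F z -> (`|z| = 2)%N \/ odd `|z|.
Proof. by case=> [[->|[]]]; auto. Qed.

Lemma conv (c y z : int) : F (c - y) -> F (c + y) -> F (c - z) -> F (c + z) ->
  y \in [:: 2; -2; 5; -5] -> z \in [:: 2; -2; 5; -5] -> y <> z -> y <> - z -> c = 0.
Proof.
move=> /FG f1 /FG f2 /FG f3 /FG f4.
rewrite !inE => /or4P[]/eqP e /or4P[]/eqP e' nyz nyz'; subst y z => //;
  try (by exfalso; apply: nyz'); apply: conv0;
  rewrite ?opprK in f1 f2 f3 f4 *; by [].
Qed.

Theorem mainTheorem5 (L : K122 -> int) :
  prime_distance_labeling L ->
  (L vx = 0 ->
     [:: L vy1; L vy2; L vz1; L vz2] =i [:: 2; -2; 5; -5] /\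
     L vy1 = - L vy2 /\ L vz1 = - L vz2) /\
  (([:: L vy1; L vy2; L vz1; L vz2] =i [:: 2; -2; 5; -5] /\
     L vy1 = - L vy2 /\ L vz1 = - L vz2) -> L vx = 0).
Proof.
case=> inj pr.
have P : forall u v, part u != part v -> F (L u - L v).
  by move=> u v /eqP h; apply: FP; apply: pr.
have ne : forall u v, u <> v -> L u <> L v by move=> u v h e; apply: h; apply: inj.
split.
- move=> x0.
  have Fx : forall u, part u != 0%N -> F (L u).
    by move=> u h; have := P u vx h; rewrite x0 subr0.
  have h : H (L vy1) (L vy2) (L vz1) (L vz2).
    split; try (apply: ne; discriminate).
    + by split; apply: ne; discriminate.
    + by split; apply: Fx.
    + by split; apply: P.
  have [[[[e1 e2]|[e1 e2]] [[e3 e4]|[e3 e4]]]|[[[e3 e4]|[e3 e4]] [[e1 e2]|[e1 e2]]]] := lemMain h;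
    rewrite e1 e2 e3 e4; (split; [apply: perm_mem; by [] | by []]).
- case=> m [e1 e2].
  have my1 : L vy1 \in [:: 2; -2; 5; -5] by rewrite -m mem_head.
  have mz1 : L vz1 \in [:: 2; -2; 5; -5] by rewrite -m !inE eqxx !orbT.
  apply: (conv (y := L vy1) (z := L vz1)) => //.
  + by apply: P.
  + by rewrite e1; apply: P.
  + by apply: P.
  + by rewrite e2; apply: P.
  + by apply: ne.
  + by rewrite e2 opprK; apply: ne.
Qed.
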